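(* Let $L$ be the real vector space of real $4\times 4$ matrices, and let $\tau:L\to L$ be a composition of a finite sequence of $3$-cyclic permutations of either rows or columns (i.e. each step cyclically permutes three of the rows, or three of the columns, of a matrix). Then there exists a continuous map (isotopy) $T:L\times[0,1]\to L$ such that $T(M,0)=M$, $T(M,1)=\tau(M)$ and $\operatorname{rank}T(M,t)=\operatorname{rank}M$ for all $M\in L$ and $t\in[0,1]$. *)

(* Defs.v *)
From HB Require Import structures.
From mathcomp Require Import all_boot all_order all_algebra all_fingroup.
From mathcomp Require Import all_classical all_reals all_analysis.
Set Implicit Arguments. Unset Strict Implicit. Unset Printing Implicit Defensive.
Import Order.TTheory GRing.Theory Num.Theory.
Import numFieldTopology.Exports numFieldNormedType.Exports.
Local Open Scope ring_scope.

Definition is_3cycle (n : nat) (s : 'S_n) : Prop :=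
  exists a b c : 'I_n,
    [/\ a != b, b != c, a != c,
        [/\ s a = b, s b = c & s c = a] &
        forall i, i != a -> i != b -> i != c -> s i = i].

Definition step_perm (R : Type) (n : nat) (st : bool * 'S_n)
  (M : 'M[R]_n) : 'M[R]_n :=
  if st.1 then row_perm st.2 M else col_perm st.2 M.

Definition compose_steps (R : Type) (n : nat) (l : seq (bool * 'S_n))
  : 'M[R]_n -> 'M[R]_n :=
  foldr (fun st f => step_perm st \o f) id l.

(* Main.v *)
Require Import Defs.
From HB Require Import structures.
From mathcomp Require Import all_boot all_order all_algebra all_fingroup.
From mathcomp Require Import all_classical all_reals all_analysis.
From mathcomp Require Import ring lra.
Import Order.TTheory GRing.Theory Num.Theory.
Import numFieldTopology.Exports numFieldNormedType.Exports.
Local Open Scope ring_scope.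
Local Open Scope classical_set_scope.

Lemma cyc3 (s : 'S_4) : is_3cycle s -> (s * s * s = 1)%g.
Proof.
move=> [a [b [c [ab bc ac [sa sb sc] so]]]].
apply/permP => i; rewrite !permM perm1.
case: (eqVneq i a) => [->|ia]; first by rewrite sa sb sc.
case: (eqVneq i b) => [->|ib]; first by rewrite sb sc sa.
case: (eqVneq i c) => [->|ic]; first by rewrite sc sa sb.
by rewrite !so.
Qed.

Lemma pmx3 (R : realType) (s : 'S_4) : (s * s * s = 1)%g -> (perm_mx s : 'M[R]_4) ^+ 3 = 1.
Proof.
move=> h; rewrite !exprS expr0 mulr1 -!mulmxE -!perm_mxM mulgA h.
exact: perm_mx1.
Qed.

Lemma ac6 (R : ringType) (V : lmodType R) (x y z : V) (a b c d e f : R) :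
  (a*:x + b*:y + c*:z) + (d*:y + e*:z + f*:x) = (a+f)*:x + (b+d)*:y + (c+e)*:z.
Proof.
rewrite !scalerDl.
set A := a*:x. set B := b*:y. set C := c*:z. set D := d*:y. set E := e*:z. set F := f*:x.
rewrite -!addrA; congr (_ + _).
rewrite [RHS]addrCA; congr (_ + _).
rewrite [RHS]addrCA [LHS]addrCA; congr (_ + _).
by rewrite [RHS]addrC -addrA.
Qed.

Lemma algE (R : realType) (P : 'M[R]_4) (u t a b c : R) : P ^+ 3 = 1 ->
  (u *: 1 + t *: P) * (a *: 1 + b *: P + c *: P ^+ 2)
   = (u * a + t * c) *: 1 + (u * b + t * a) *: P + (u * c + t * b) *: P ^+ 2.
Proof.
move=> P3.
rewrite mulrDl !mulrDr -!scalerAl -!scalerAr !scalerA !mul1r !mulr1.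
rewrite -exprS P3 -expr2.
by rewrite ac6.
Qed.

Lemma algE' (R : realType) (P : 'M[R]_4) (u t a b c : R) : P ^+ 3 = 1 ->
  (a *: 1 + b *: P + c *: P ^+ 2) * (u *: 1 + t *: P)
   = (u *: 1 + t *: P) * (a *: 1 + b *: P + c *: P ^+ 2).
Proof.
move=> P3; rewrite algE //.
rewrite mulrDr !mulrDl -!scalerAl -!scalerAr !scalerA !mul1r !mulr1.
rewrite -exprSr P3 -expr2.
rewrite ac6; congr (_ *: _ + _ *: _ + _ *: _); ring.
Qed.

Lemma alg3 {R : realType} (P : 'M[R]_4) (t : R) : P ^+ 3 = 1 ->
  exists B, ((1 - t) *: 1 + t *: P) * B = 1 /\ B * ((1 - t) *: 1 + t *: P) = 1.
Proof.
move=> P3.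
have D0 : (1 - t) ^+ 2 - (1 - t) * t + t ^+ 2 != 0.
  have -> : (1 - t) ^+ 2 - (1 - t) * t + t ^+ 2 = 3 * (t - 2^-1) ^+ 2 + 4^-1 by field.
  by apply: lt0r_neq0; apply: ltr_pwDr; rewrite ?invr_gt0 // mulr_ge0 // sqr_ge0.
move: D0; set D := (_ - _ + _) => D0.
exists (((1 - t) ^+ 2 / D) *: 1 + (- (t * (1 - t)) / D) *: P + (t ^+ 2 / D) *: P ^+ 2).
rewrite algE' // algE //.
have -> : (1 - t) * ((1 - t) ^+ 2 / D) + t * (t ^+ 2 / D) = 1.
  rewrite /D; field; exact: D0.
have -> : (1 - t) * (- (t * (1 - t)) / D) + t * ((1 - t) ^+ 2 / D) = 0.
  rewrite /D; field; exact: D0.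
have -> : (1 - t) * (t ^+ 2 / D) + t * (- (t * (1 - t)) / D) = 0.
  rewrite /D; field; exact: D0.
by rewrite !scale0r !addr0 scale1r.
Qed.

Definition stepp {R : realType} (st : bool * 'S_4) (t : R) (M : 'M[R]_4) : 'M[R]_4 :=
  (1 - t) *: M + t *: step_perm st M.

Lemma rank_stepp (R : realType) (st : bool * 'S_4) (t : R) (M : 'M[R]_4) :
  is_3cycle st.2 -> \rank (stepp st t M) = \rank M.
Proof.
case: st => [[] s] /= /cyc3 h; rewrite /stepp /step_perm /=.
- have [B [AB BA]] := alg3 _ t (pmx3 R _ h).
  have -> : (1 - t) *: M + t *: row_perm s M = ((1 - t) *: 1 + t *: perm_mx s) *m M.
    by rewrite row_permE mulmxDl -!scalemxAl mul1mx.
  apply/eqP; rewrite eqn_leq mxrankM_maxr /=.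
  set A := (_ *: 1 + _) in AB BA *.
  have HM : M = B *m (A *m M) by rewrite mulmxA mulmxE BA; rewrite -[M in LHS]mul1mx.
  by rewrite {1}HM; exact: mxrankM_maxr.
- have h' : (s^-1 * s^-1 * s^-1 = 1)%g by rewrite -mulgA -!invMg h invg1.
  have [B [AB BA]] := alg3 _ t (pmx3 R _ h').
  have -> : (1 - t) *: M + t *: col_perm s M = M *m ((1 - t) *: 1 + t *: perm_mx s^-1).
    by rewrite col_permE mulmxDr -!scalemxAr mulmx1.
  apply/eqP; rewrite eqn_leq mxrankM_maxl /=.
  set A := (_ *: 1 + _) in AB BA *.
  have HM : M = (M *m A) *m B by rewrite -mulmxA mulmxE AB; rewrite -[M in LHS]mulmx1.
  by rewrite {1}HM; exact: mxrankM_maxl.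
Qed.

Lemma norm_step (R : realType) (st : bool * 'S_4) (M : 'M[R]_4) :
  `|step_perm st M| <= `|M|.
Proof.
rewrite [leLHS]/Num.Def.normr /= mx_normrE; apply: bigmax_le => // -[i j] _ /=.
rewrite /step_perm; case: st.1; rewrite mxE;
  rewrite [leRHS]/Num.Def.normr /= mx_normrE; apply/bigmax_geP; right => /=.
- by exists (st.2 i, j).
- by exists (i, st.2 j).
Qed.

Lemma step_lin (R : realType) (st : bool * 'S_4) (M N : 'M[R]_4) :
  step_perm st M - step_perm st N = step_perm st (M - N).
Proof.
by rewrite /step_perm; case: st.1; apply/matrixP => i j; rewrite !mxE.
Qed.

Lemma step_cont (R : realType) (st : bool * 'S_4) :
  continuous (fun M : 'M[R]_4 => step_perm st M).
Proof.
move=> x; apply/cvgrPdist_lt; first exact: (alias_nbhs_filter x).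
move=> e e0; near=> y.
rewrite step_lin; apply: (@le_lt_trans _ _ (`|x - y|)); first exact: norm_step.
near: y; exact: (@cvgr_dist_lt _ _ _ (nbhs x) _ id x (@cvg_id _ (nbhs x)) e e0).
Unshelve. all: by end_near.
Qed.

Definition ipath {R : realType} (l : seq (bool * 'S_4)) (p : 'M[R]_4 * R) : 'M[R]_4 :=
  foldr (fun st f => stepp st p.2 \o f) id l p.1.

Lemma ipath_cont (R : realType) (l : seq (bool * 'S_4)) :
  continuous (fun p : 'M[R]_4 * R => ipath l p).
Proof.
elim: l => [|st l IH] p.
  exact: cvg_fst.
rewrite /ipath /=.
have E : (fun q : 'M[R]_4 * R => stepp st q.2 (foldr (fun st f => stepp st q.2 \o f) id l q.1))
  = (fun q => (1 - q.2) *: ipath l q) \+ (fun q => q.2 *: step_perm st (ipath l q)).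
  by apply: funext.
rewrite E.
apply: cvgD.
  apply: cvgZ; last exact: IH.
  apply: cvgB; first exact: cvg_cst.
  exact: cvg_snd.
apply: cvgZ; first exact: cvg_snd.
apply: (cvg_comp _ _ (IH p)).
exact: step_cont.
Qed.

Theorem corollary2p6 (R : realType) (l : seq (bool * 'S_4))
  (hl : forall st, st \in l -> is_3cycle st.2) :
  exists T : 'M[R]_(4,4) * R -> 'M[R]_(4,4),
    [/\ {within [set p : 'M[R]_(4,4) * R | 0 <= p.2 <= 1], continuous T},
        (forall M, T (M, 0) = M),
        (forall M, T (M, 1) = compose_steps l M) &
        (forall M t, 0 <= t <= 1 -> \rank (T (M, t)) = \rank M)].
Proof.
exists (fun p => ipath l p); split.
- apply: continuous_subspaceT => p; exact: ipath_cont.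
- move=> M; rewrite /ipath /=; elim: l {hl} => [|st l IH] //=.
  by rewrite IH /stepp subr0 scale1r scale0r addr0.
- move=> M; rewrite /ipath /=; elim: l {hl} => [|st l IH] //=.
  by rewrite IH /stepp subrr scale0r add0r scale1r.
- move=> M t _; rewrite /ipath /=; elim: l hl => [|st l IH] hl //=.
  rewrite rank_stepp; last by apply: hl; rewrite inE eqxx.
  by apply: IH => st' h; apply: hl; rewrite inE h orbT.
Qed.
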